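(* Let $\widetilde Q_m(x)=x^mQ_m(1/x)$. Then for all $m\ge 0$, $$\widetilde Q_{m+1}(x)=(2mx+4m+2x+3)\widetilde Q_m(x)+2x(1+x)\widetilde Q_m'(x),\qquad \widetilde Q_0(x)=1.$$
   Context: $P_m(x)=\sum_{i=0}^m d_i(m)x^i$ with $d_i(m)=2^{-2m}\sum_{k=i}^m 2^k\binom{2m-2k}{m-k}\binom{m+k}{k}\binom{k}{i}$ (the Boros–Moll polynomials); $Q_m(x)=2^m m!\,x^mP_m(1/x)$, so $\widetilde Q_m(x)=2^m m!\,P_m(x)$. *)

(* Defs.v *)
From HB Require Import structures.
From mathcomp Require Import all_boot all_order all_algebra.
Set Implicit Arguments. Unset Strict Implicit. Unset Printing Implicit Defensive.
Import Order.TTheory GRing.Theory Num.Theory.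
Local Open Scope ring_scope.

Definition bm_coef (m i : nat) : rat :=
  (2 ^+ (2 * m))^-1 *
  \sum_(i <= k < m.+1)
     (2 ^+ k * ('C(2 * m - 2 * k, m - k) * 'C(m + k, k) * 'C(k, i))%:R).

Definition P (m : nat) : {poly rat} := \poly_(i < m.+1) bm_coef m i.

(* Q_m(x) = 2^m m! x^m P_m(1/x): as a polynomial, the coefficient of x^i is
   2^m m! d_{m-i}(m) for i <= m. *)
Definition Q (m : nat) : {poly rat} :=
  \poly_(i < m.+1) ((2 ^ m * m`!)%:R * (P m)`_(m - i)).

(* Qtilde_m(x) = x^m Q_m(1/x): coefficient of x^i is (Q m)`_(m-i), i <= m. *)
Definition Qt (m : nat) : {poly rat} := \poly_(i < m.+1) (Q m)`_(m - i).

(* Main.v *)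
Require Import Defs.
From HB Require Import structures.
From mathcomp Require Import all_boot all_order all_algebra.
From mathcomp Require Import zify ring lra.
Import GRing.Theory Num.Theory.
Local Open Scope ring_scope.

Lemma coefY (k i : nat) : ((1 + 'X : {poly rat}) ^+ k)`_i = ('C(k, i))%:R.
Proof.
elim: k i => [|k IH] i.
  by rewrite expr0 coef1; case: i.
rewrite exprS mulrDl mul1r coefD coefXM IH; case: i => [|i] /=.
  by rewrite addr0 !bin0.
by rewrite IH binS natrD addrC.
Qed.
Definition a (m k : nat) : rat := 2 ^+ k * (('C(2 * m - 2 * k, m - k) * 'C(m+k,k))%N)%:R.
Definition S m : {poly rat} := \sum_(k < m.+1) a m k *: (1 + 'X)^+k.
Lemma P_S m : P m = (2 ^+ (2 * m))^-1 *: S m.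
Proof.
apply/polyP => i; rewrite coefZ coef_poly coef_sum /bm_coef.
rewrite (eq_bigr (fun k : 'I_m.+1 => a m k * ('C(k,i))%:R)); last by move=> k _; rewrite coefZ coefY.
case: ltnP => Hi.
  congr (_ * _).
  rewrite -(big_mkord xpredT (fun k => a m k * ('C(k, i))%:R)).
  rewrite (@big_cat_nat _ _ _ i 0 m.+1) //=; last exact: ltnW.
  rewrite [X in _ = X + _]big1_seq ?add0r; last first.
    move=> k /andP[_]; rewrite mem_index_iota => /andP[_ Hk].
    by rewrite bin_small // mulr0n mulr0.
  apply: eq_big_nat => k _.
  by rewrite /a !natrM mulrA.
rewrite big1 ?mulr0 // => k _; rewrite bin_small ?mulr0n ?mulr0 //.
exact: leq_trans (ltn_ord k) Hi.
Qed.
Lemma cb n : (n.+1 * 'C(2 * n.+1, n.+1) = 2 * (2 * n + 1) * 'C(2 * n, n))%N.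
Proof.
have h1 := mul_bin_diag (2 * n.+1) n.
have h2 := mul_bin_diag (2 * n).+1 n.
have h3 : 'C((2 * n).+1, n.+1) = 'C((2 * n).+1, n).
  by rewrite -bin_sub; [congr 'C(_,_); lia | lia].
rewrite /= in h2; rewrite h3 in h2.
have e : (2 * n.+1).-1 = (2 * n).+1 by lia.
rewrite e in h1. lia.
Qed.
Lemma bA n k : (k.+1 * 'C(n + k.+1, k.+1) = (n + k.+1) * 'C(n + k, k))%N.
Proof. by rewrite -(mul_bin_diag (n + k.+1) k) addnS. Qed.
Lemma bB n k : (n.+1 * 'C(n.+1 + k, k) = (n.+1 + k) * 'C(n + k, k))%N.
Proof.
have h := mul_bin_down (n.+1 + k) k.
rewrite addSn /= in h.
have e : ((n + k).+1 - k = n.+1)%N by lia.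
rewrite e in h; rewrite addSn; lia.
Qed.
Lemma A1 m k : (k < m)%N ->
  (m.+1)%:R * a m.+1 k.+1 =
  4 * (m + k + 1)%:R * a m k + 2 * (2 * m%:R - 1 - 2 * k%:R) * a m k.+1.
Proof.
move=> hk; have [n hn] : exists n, m = (k + n.+1)%N by exists (m - k.+1)%N; lia.
rewrite /a.
have e1 : (2 * m.+1 - 2 * k.+1 = 2 * n.+1)%N by lia.
have e2 : (m.+1 - k.+1 = n.+1)%N by lia.
have e3 : (2 * m - 2 * k = 2 * n.+1)%N by lia.
have e4 : (m - k = n.+1)%N by lia.
have e5 : (2 * m - 2 * k.+1 = 2 * n)%N by lia.
have e6 : (m - k.+1 = n)%N by lia.
rewrite e1 e2 e3 e4 e5 e6 !natrM.
have h1 := cb n. have h2 := bA m k. have h3 := bB m k.+1.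
move: h1 h2 h3 => /(congr1 (fun x => x%:R : rat)) h1
   /(congr1 (fun x => x%:R : rat)) h2 /(congr1 (fun x => x%:R : rat)) h3.
rewrite !natrM in h1 h2 h3.
set c := ('C(2 * n.+1, n.+1))%:R in h1 *.
set b := ('C(2 * n, n))%:R in h1 *.
set u := ('C(m + k, k))%:R in h2 *.
set v := ('C(m + k.+1, k.+1))%:R in h2 h3 *.
set w := ('C(m.+1 + k.+1, k.+1))%:R in h3 *.
have hc : c = 2 * (2 * n + 1)%:R * b / (n.+1)%:R.
  by rewrite -h1 mulrC mulKf // pnatr_eq0.
have hu : u = (k.+1)%:R * v / (m + k.+1)%:R.
  by rewrite h2 mulrC mulKf // pnatr_eq0 addnS.
have hw : w = (m.+1 + k.+1)%:R * v / (m.+1)%:R.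
  by rewrite -h3 mulrC mulKf // pnatr_eq0.
rewrite hc hu hw hn.
rewrite !(natrD, natrM, exprS) -?natr1 !(natrD, natrM).
field.
have hk0 := ler0n rat k; have hn0 := ler0n rat n.
by apply/and3P; split; apply: lt0r_neq0; lra.
Qed.
Lemma A0 m : (m.+1)%:R * a m.+1 0 = 2 * (2 * m%:R + 1) * a m 0.
Proof.
rewrite /a ?subn0 ?muln0 ?addn0 ?bin0 ?muln1 ?expr0 ?mul1r.
have := cb m => /(congr1 (fun x => x%:R : rat)); rewrite !natrM => ->.
rewrite ?natrD ?natrM; ring.
Qed.
Lemma A2 m : (m.+1)%:R * a m.+1 m.+1 = 4 * (2 * m + 1)%:R * a m m.
Proof.
rewrite /a !subnn bin0 !mul1n.
have -> : (m.+1 + m.+1 = 2 * m.+1)%N by lia.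
have -> : (m + m = 2 * m)%N by lia.
have := cb m => /(congr1 (fun x => x%:R : rat)); rewrite !natrM.
rewrite exprS => h.
rewrite mulrCA h; ring.
Qed.
Lemma term m k (c : rat) :
  let Y := (1 + 'X : {poly rat}) in
  ((2 * m%:R) *: 'X + (4 * m%:R + 3)%:P + 2 *: 'X) * (c *: Y ^+ k)
  + (2 *: 'X * (1 + 'X)) * (c *: (Y ^+ k.-1 *+ k))
  = (c * (2 * m%:R + 2 + 2 * k%:R)) *: Y ^+ k.+1
    + (c * (2 * m%:R + 1 - 2 * k%:R)) *: Y ^+ k.
Proof.
move=> Y.
have hX : ('X : {poly rat}) = Y - 1 by rewrite /Y; ring.
rewrite -/Y hX -!mul_polyC !(rmorphD, rmorphM, rmorphB, rmorph_nat, rmorph1) /=.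
rewrite -mulr_natr.
case: k => [|k] /=; first by rewrite !mulr0 expr1 expr0; ring.
rewrite !exprS; ring.
Qed.
Lemma bump0' i : bump 0 i = i.+1.
Proof. by []. Qed.

Lemma dY : (1 + 'X : {poly rat})^`() = 1.
Proof. by rewrite derivD derivX -polyC1 derivC add0r. Qed.

Lemma S_rec m : (m.+1)%:R *: S m.+1 =
  2 *: (((2 * m%:R) *: 'X + (4 * m%:R + 3)%:P + 2 *: 'X) * S m
        + (2 *: 'X * (1 + 'X)) * (S m)^`()).
Proof.
rewrite /S [X in _ = 2 *: (_ + _ * X)]raddf_sum !mulr_sumr -big_split /=.
under [in RHS]eq_bigr => k _ do rewrite derivZ deriv_exp dY mul1r term.
rewrite !scaler_sumr. under [in RHS]eq_bigr => k _ do rewrite scalerDr !scalerA. rewrite big_split /=.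
under eq_bigr => k _ do rewrite scalerA.
rewrite [LHS]big_ord_recl [in LHS]big_ord_recr /=.
rewrite [X in _ = _ + X]big_ord_recl [X in _ = X + _]big_ord_recr /=.
rewrite !bump0' A0 A2.
under [X in _ = _ + (_ + X)]eq_bigr => i _ do rewrite bump0'.
rewrite (eq_bigr (fun i : 'I_m => (2 * (a m i * (2 * m%:R + 2 + 2 * i%:R))) *: (1 + 'X) ^+ i.+1 + (2 * (a m i.+1 * (2 * m%:R + 1 - 2 * (i.+1)%:R))) *: (1 + 'X) ^+ i.+1)); last first.
  move=> i _; rewrite A1 // -scalerDl; congr (_ *: _).
  rewrite -!natr1 !natrD; ring.
rewrite big_split /=.
rewrite -!mul_polyC ?natrD ?natrM.
ring.
Qed.
Lemma Qt_P m : Qt m = ((2 ^ m * m`!)%N)%:R *: P m.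
Proof.
apply/polyP => i; rewrite coefZ /Qt coef_poly.
case: ltnP => Hi.
  rewrite /Q coef_poly ifT; last by rewrite ltnS leq_subr.
  by rewrite subKn.
by rewrite /P coef_poly ltnNge Hi /= mulr0.
Qed.

Theorem mainTheorem7 :
  Qt 0 = 1 /\
  forall m : nat,
    Qt m.+1 =
      ((2 * m%:R) *: 'X + (4 * m%:R + 3)%:P + 2 *: 'X) * Qt m
      + (2 *: 'X * (1 + 'X)) * (Qt m)^`().
Proof.
split.
  rewrite Qt_P P_S /S big_ord1 /a /= !expr0 !mul1r invr1 !scale1r.
  by [].
move=> m.
have hS : S m.+1 = ((m.+1)%:R^-1 * 2) *:
   (((2 * m%:R) *: 'X + (4 * m%:R + 3)%:P + 2 *: 'X) * S m
        + (2 *: 'X * (1 + 'X)) * (S m)^`()).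
  by rewrite -scalerA -S_rec scalerA mulVf ?scale1r // pnatr_eq0.
rewrite !Qt_P !P_S !scalerA hS derivZ -!scalerAr -scalerDr !scalerA.
congr (_ *: _).
have h2 : (2 : rat) ^+ (2 * m) != 0 by rewrite expf_neq0.
have hm : (m.+1%:R : rat) != 0 by rewrite pnatr_eq0.
rewrite factS !natrM !natrX mulnS exprD.
move: h2 hm; set q := (2 : rat) ^+ (2 * m); set r := (m.+1%:R : rat); move=> h2 hm.
rewrite exprS.
field.
by rewrite h2 /= nat1r pnatr_eq0.
Qed.
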